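(* Let $A$ be a finite set and let $v:2^A\to\mathbb{R}_{\ge 0}$ be a monotone subadditive function with $v(\emptyset)=0$. Let $S\subseteq A$ and let $k$ be a positive integer such that $v(S)\ge k\cdot v(\{i\})$ for every $i\in S$. Suppose $S$ is divided uniformly at random into two groups $T_1$ and $T_2=S\setminus T_1$ (each element of $S$ is placed into $T_1$ or $T_2$ independently with probability $\frac12$ each). Then with probability at least $\frac{1}{2}$ we have both $v(T_1)\ge \frac{k-1}{4k}v(S)$ and $v(T_2)\ge \frac{k-1}{4k}v(S)$.
   Context: Subadditive means $v(S)+v(T)\ge v(S\cup T)$ for all $S,T\subseteq A$; monotone means $v(S)\le v(T)$ whenever $S\subseteq T$. *)

(* Defs.v *)
From HB Require Import structures.
From mathcomp Require Import all_boot all_order all_algebra.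
Set Implicit Arguments. Unset Strict Implicit. Unset Printing Implicit Defensive.
Import Order.TTheory GRing.Theory Num.Theory.
Local Open Scope ring_scope.

Definition monotone_setfun (A : finType) (R : realFieldType) (v : {set A} -> R) :=
  forall S T : {set A}, S \subset T -> v S <= v T.

Definition subadditive_setfun (A : finType) (R : realFieldType) (v : {set A} -> R) :=
  forall S T : {set A}, v (S :|: T) <= v S + v T.

(* Probability of event P when T1 is a uniformly random subset of S
   (equivalently: each element of S put into T1 independently w.p. 1/2). *)
Definition prob_random_half (A : finType) (R : realFieldType)
    (S : {set A}) (P : {set A} -> bool) : R :=
  #|[set T in powerset S | P T]|%:R / #|powerset S|%:R.

(* Main.v *)
Require Import Defs.
From HB Require Import structures.
From mathcomp Require Import all_boot all_order all_algebra.
From mathcomp Require Import ring lra zify.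
Import Order.TTheory GRing.Theory Num.Theory.
Local Open Scope ring_scope.

Lemma split_exists (A : finType) (R : realFieldType) (v : {set A} -> R)
    (v_ge0 : forall X : {set A}, 0 <= v X)
    (v_mono : monotone_setfun v)
    (v_subadd : subadditive_setfun v)
    (S : {set A}) (h W : R) (W0 : 0 <= W)
    (hW : forall i, i \in S -> v [set i] <= W)
    (hE : h = (v S - W) / 4) :
  exists U : {set A}, [/\ U \subset S, 2 * h <= v U & 2 * h <= v (S :\: U)].
Proof.
have hV : 2 * h <= v S by rewrite hE; have := v_ge0 S; lra.
have base : 2 * h <= v set0 -> exists U : {set A}, [/\ U \subset S, 2 * h <= v U & 2 * h <= v (S :\: U)].
  by move=> H; exists set0; rewrite sub0set setD0.
suff : forall n (X : {set A}), (#|X| <= n)%N -> X \subset S -> 2 * h <= v X ->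
   exists U : {set A}, [/\ U \subset S, 2 * h <= v U & 2 * h <= v (S :\: U)].
  by move/(_ #|S| S (leqnn _) (subxx _) hV).
elim=> [|n IH] X cX sXS hX.
  by move: cX; rewrite leqn0 cards_eq0 => /eqP X0; apply: base; rewrite -X0.
case: (set_0Vmem X) => [X0|[x xX]]; first by apply: base; rewrite -X0.
case: (boolP (2 * h <= v (X :\ x))) => H.
  apply: (IH (X :\ x)) => //.
    by move: cX; rewrite (cardsD1 x X) xX; lia.
  exact: subset_trans (subsetDl X [set x]) sXS.
have Hx : v (X :\ x) < 2 * h by rewrite ltNge.
exists X; split => //.
have e1 : X :|: (S :\: X) = S.
  apply/setP => y; rewrite !inE; case yX: (y \in X) => //=.
  by rewrite (subsetP sXS).
have e2 : [set x] :|: (X :\ x) = X by rewrite setD1K.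
have s1 := v_subadd X (S :\: X); rewrite e1 in s1.
have s2 := v_subadd [set x] (X :\ x); rewrite e2 in s2.
have := hW x (subsetP sXS x xX).
rewrite hE in Hx *; lra.
Qed.

Theorem lemma2p1 (A : finType) (R : realFieldType) (v : {set A} -> R)
    (v_ge0 : forall X : {set A}, 0 <= v X)
    (v_mono : monotone_setfun v)
    (v_subadd : subadditive_setfun v)
    (v_set0 : v set0 = 0)
    (S : {set A}) (k : nat) (k_gt0 : (0 < k)%N)
    (hk : forall i, i \in S -> k%:R * v [set i] <= v S) :
  1 / 2 <= prob_random_half R S
    (fun T1 => ((k%:R - 1) / (4 * k%:R) * v S <= v T1) &&
               ((k%:R - 1) / (4 * k%:R) * v S <= v (S :\: T1))).
Proof.
have Kgt0 : 0 < k%:R :> R by rewrite ltr0n.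
have Kn0 : k%:R != 0 :> R by exact: lt0r_neq0.
set h := (k%:R - 1) / (4 * k%:R) * v S.
have W0 : 0 <= v S / k%:R by rewrite divr_ge0 // ltW.
have hW : forall i, i \in S -> v [set i] <= v S / k%:R.
  by move=> i iS; rewrite ler_pdivlMr // mulrC; apply: hk.
have hE : h = (v S - v S / k%:R) / 4 by rewrite /h; field.
have [U [sUS hU1 hU2]] := split_exists A R v v_ge0 v_mono v_subadd S h _ W0 hW hE.
set U2 := S :\: U in hU2.
have noboth : forall W T, 2 * h <= v W ->
    ~~ ((v (T :&: W) < h) && (v (W :\: T) < h)).
  move=> W T hW2; apply/negP => /andP [a b].
  have e : (T :&: W) :|: (W :\: T) = W.
    by apply/setP => y; rewrite !inE; case: (y \in T); case: (y \in W).
  have := v_subadd (T :&: W) (W :\: T); rewrite e; lra.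
pose f := fun T : {set A} => (T :\: U) :|: (U :\: T).
have fK : involutive f.
  by move=> T; apply/setP => y; rewrite !inE; case: (y \in T); case: (y \in U).
pose bad1 T := (v (T :&: U) < h) && (v (T :&: U2) < h).
pose bad2 T := (v (U :\: T) < h) && (v (U2 :\: T) < h).
pose D := [set T in powerset S | bad1 T || bad2 T].
have UU2 : U :&: U2 = set0.
  by apply/setP => y; rewrite !inE; case: (y \in U).
have fD : forall T, T \in D -> f T \notin D.
  move=> T; rewrite !inE /bad1 /bad2.
  have e1 : f T :&: U = U :\: T.
    by apply/setP => y; rewrite !inE; case: (y \in T); case: (y \in U).
  have e2 : f T :&: U2 = T :&: U2.
    apply/setP => y; rewrite !inE; case: (y \in T); case yU: (y \in U) => //=.
  have e3 : U :\: f T = T :&: U.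
    by apply/setP => y; rewrite !inE; case: (y \in T); case: (y \in U).
  have e4 : U2 :\: f T = U2 :\: T.
    apply/setP => y; rewrite !inE; case: (y \in T); case yU: (y \in U) => //=.
  rewrite e1 e2 e3 e4.
  have n1 := noboth U T hU1; have n2 := noboth U2 T hU2.
  move: n1 n2; case: (v (T :&: U) < h); case: (v (U :\: T) < h);
    case: (v (T :&: U2) < h); case: (v (U2 :\: T) < h); by rewrite ?andbF.
have DI : D :&: [set f T | T in D] = set0.
  apply/setP => T; rewrite inE in_set0; apply/negbTE/andP => [[TD /imsetP [T' T'D eT]]].
  by move: (fD T' T'D); rewrite -eT TD.
have fS : forall T : {set A}, T \subset S -> f T \subset S.
  move=> T sTS; apply/subsetP => y; rewrite !inE => /orP [/andP [_ yT]|/andP [_ yU]].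
    exact: (subsetP sTS).
  exact: (subsetP sUS).
have DUP : D :|: [set f T | T in D] \subset powerset S.
  apply/subsetP => T; rewrite inE => /orP [|/imsetP [T' T'D ->]].
    by rewrite !inE => /andP [].
  by move: T'D; rewrite !inE => /andP [sT' _]; apply: fS.
have cardf : #|[set f T | T in D]| = #|D| by apply: card_imset; exact: can_inj fK.
have c1 := cardsUI D [set f T | T in D].
rewrite DI cards0 cardf addn0 in c1.
have c2 := subset_leq_card DUP.
rewrite /prob_random_half; set G := [set T in powerset S | _].
have GP : G \subset powerset S by apply/subsetP => T; rewrite inE => /andP [].
have c3 := cardsID G (powerset S).
rewrite (setIidPr GP) in c3.
have CD : powerset S :\: G \subset D.
  apply/subsetP => T; rewrite !inE => /andP [ng sTS]; rewrite sTS /=.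
  move: ng; rewrite sTS /= negb_and -!ltNge => /orP [lt|lt].
    apply/orP; left; apply/andP; split; apply: le_lt_trans lt; apply: v_mono;
      exact: subsetIl.
  apply/orP; right; apply/andP; split; apply: le_lt_trans lt; apply: v_mono.
    exact: setSD.
  exact: setSD (subsetDl S U).
have c4 := subset_leq_card CD.
have key : (#|powerset S| <= 2 * #|G|)%N.
  move: c1 c2 c3 c4; move: #|powerset S| #|G| #|D| #|powerset S :\: G| #|D :|: [set f T | T in D]|.
  by clear; move=> a b c d e; lia.
have P0 : (0 < #|powerset S|)%N by rewrite card_powerset expn_gt0.
rewrite ler_pdivlMr ?ltr0n //.
move: key; rewrite -(ler_nat R) natrM.
move: #|powerset S|%:R #|G|%:R => a b; lra.
Qed.
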